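(* Let $t>0$ be fixed and $x_1>0$. Then the characteristic triangles $\Delta(0,t)$ and $\Delta(x_1,t)$ do not intersect in the open quadrant $(0,\infty)^2$.
   Context: Standing assumptions: $u_0,u_b:[0,\infty)\to\mathbb{R}$ bounded measurable with $u_b>0$; $\rho_0,\rho_b:[0,\infty)\to(0,\infty)$ positive locally bounded measurable. For $x,t,y,\tau\ge0$: $F(y,x,t)=\int_0^y[tu_0(\eta)+\eta-x]\rho_0(\eta)\,d\eta$, $G(\tau,x,t)=\int_0^\tau[x-u_b(\eta)(t-\eta)]\rho_b(\eta)u_b(\eta)\,d\eta$, $F(x,t)=\min_{y\ge0}F(y,x,t)$, $G(x,t)=\min_{\tau\ge0}G(\tau,x,t)$ (minima attained); $y_*\le y^*$ smallest/largest minimizers of $F(\cdot,x,t)$, $\tau_*\le\tau^*$ those of $G(\cdot,x,t)$. Characteristic triangle $\Delta(x,t)$ ($x\ge0,t>0$): (1) if $x>0$, $F(x,t)<G(x,t)$: convex hull of $(x,t),(y_*(x,t),0),(y^*(x,t),0)$; (2) if $F(x,t)>G(x,t)$: convex hull of $(x,t),(0,\tau_*(x,t)),(0,\tau^*(x,t))$; (3) if $F(x,t)=G(x,t)$: convex hull of $(x,t),(y^*(x,t),0),(0,\tau^*(x,t)),(0,0)$; (4) if $x=0$, $F(0,t)<G(0,t)$: convex hull of $(0,t),(0,0),(y^*(0,t),0)$. *)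

(* Defs.v *)
From HB Require Import structures.
From mathcomp Require Import all_boot all_order all_algebra.
From mathcomp Require Import all_classical all_reals all_analysis.
Set Implicit Arguments. Unset Strict Implicit. Unset Printing Implicit Defensive.
Import Order.TTheory GRing.Theory Num.Theory.
Local Open Scope classical_set_scope.
Local Open Scope ring_scope.

Definition nonneg_half (R : realType) : set R := [set x : R | 0 <= x].

(* Standing assumptions on the data u0, ub, rho0, rhob (only their values on
   [0, oo) matter). *)
Definition bounded_on_halfline (R : realType) (f : R -> R) : Prop :=
  exists M : R, forall x : R, 0 <= x -> `|f x| <= M.

Definition locally_bounded_on_halfline (R : realType) (f : R -> R) : Prop :=
  forall a : R, 0 <= a -> exists M : R, forall x : R, 0 <= x <= a -> `|f x| <= M.

Definition standing_assumptions (R : realType) (u0 ub rho0 rhob : R -> R) : Prop :=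
  [/\ measurable_fun (@nonneg_half R) u0 /\ bounded_on_halfline u0,
      measurable_fun (@nonneg_half R) ub /\ bounded_on_halfline ub
        /\ (forall x : R, 0 <= x -> 0 < ub x),
      measurable_fun (@nonneg_half R) rho0 /\ locally_bounded_on_halfline rho0
        /\ (forall x : R, 0 <= x -> 0 < rho0 x) &
      measurable_fun (@nonneg_half R) rhob /\ locally_bounded_on_halfline rhob
        /\ (forall x : R, 0 <= x -> 0 < rhob x)].

Definition Fyxt (R : realType) (u0 rho0 : R -> R) (y x t : R) : R :=
  Rintegral (@lebesgue_measure R) `[0, y]
    (fun eta => (t * u0 eta + eta - x) * rho0 eta).

Definition Gtxt (R : realType) (ub rhob : R -> R) (tau x t : R) : R :=
  Rintegral (@lebesgue_measure R) `[0, tau]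
    (fun eta => (x - ub eta * (t - eta)) * rhob eta * ub eta).

Definition Fmin (R : realType) (u0 rho0 : R -> R) (x t : R) : R :=
  inf [set Fyxt u0 rho0 y x t | y in @nonneg_half R].
Definition Gmin (R : realType) (ub rhob : R -> R) (x t : R) : R :=
  inf [set Gtxt ub rhob tau x t | tau in @nonneg_half R].

Definition Fargmin (R : realType) (u0 rho0 : R -> R) (x t : R) : set R :=
  [set y | 0 <= y /\ Fyxt u0 rho0 y x t = Fmin u0 rho0 x t].
Definition Gargmin (R : realType) (ub rhob : R -> R) (x t : R) : set R :=
  [set tau | 0 <= tau /\ Gtxt ub rhob tau x t = Gmin ub rhob x t].
Definition y_low (R : realType) (u0 rho0 : R -> R) (x t : R) : R :=
  inf (Fargmin u0 rho0 x t).
Definition y_up (R : realType) (u0 rho0 : R -> R) (x t : R) : R :=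
  sup (Fargmin u0 rho0 x t).
Definition tau_low (R : realType) (ub rhob : R -> R) (x t : R) : R :=
  inf (Gargmin ub rhob x t).
Definition tau_up (R : realType) (ub rhob : R -> R) (x t : R) : R :=
  sup (Gargmin ub rhob x t).

Definition hull3 (R : realType) (a b c : R * R) : set (R * R) :=
  [set p | exists l1 l2 l3 : R,
     [/\ 0 <= l1, 0 <= l2, 0 <= l3, l1 + l2 + l3 = 1 &
         p = (l1 * a.1 + l2 * b.1 + l3 * c.1, l1 * a.2 + l2 * b.2 + l3 * c.2)]].
Definition hull4 (R : realType) (a b c d : R * R) : set (R * R) :=
  [set p | exists l1 l2 l3 l4 : R,
     [/\ 0 <= l1, 0 <= l2, 0 <= l3, 0 <= l4 /\ l1 + l2 + l3 + l4 = 1 &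
         p = (l1 * a.1 + l2 * b.1 + l3 * c.1 + l4 * d.1,
              l1 * a.2 + l2 * b.2 + l3 * c.2 + l4 * d.2)]].

(* characteristic triangle Delta(x,t), meaningful for x >= 0, t > 0 *)
Definition char_triangle (R : realType) (u0 ub rho0 rhob : R -> R) (x t : R)
  : set (R * R) :=
  let F := Fmin u0 rho0 x t in
  let G := Gmin ub rhob x t in
  if (0 < x) && (F < G) then
    hull3 (x, t) (y_low u0 rho0 x t, 0) (y_up u0 rho0 x t, 0)
  else if G < F then
    hull3 (x, t) (0, tau_low ub rhob x t) (0, tau_up ub rhob x t)
  else if F == G then
    hull4 (x, t) (y_up u0 rho0 x t, 0) (0, tau_up ub rhob x t) (0, 0)
  else                                          (* case (4): x = 0, F < G *)
    hull3 (0, t) (0, 0) (y_up u0 rho0 x t, 0).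

(* Main.v *)
Require Import Defs.
From HB Require Import structures.
From mathcomp Require Import all_boot all_order all_algebra.
From mathcomp Require Import all_classical all_reals all_analysis.
From mathcomp Require Import ring lra.
Import Order.TTheory GRing.Theory Num.Theory.
Import numFieldNormedType.Exports.
Local Open Scope classical_set_scope.
Local Open Scope ring_scope.

Section S.
Context {R : realType}.
Notation mu := (@lebesgue_measure R).

Lemma Rint_gt0 (f : R -> R) (a b : R) : a < b ->
  mu.-integrable `]a, b] (EFin \o f) ->
  (forall x, a < x <= b -> 0 <= f x) -> (forall x, a < x < b -> 0 < f x) ->
  0 < \int[mu]_(x in `]a, b]) f x.
Proof.
move=> ab intf f0 fp.
have ge0 : 0 <= \int[mu]_(x in `]a, b]) f x.
  by apply: Rintegral_ge0 => x; rewrite /= in_itv /=; apply: f0.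
rewrite lt_neqAle ge0 andbT; apply/eqP => H0.
have fin : (\int[mu]_(x in `]a, b]) (EFin \o f) x \is a fin_num)%E by apply: integrable_fin_num.
have I0 : (\int[mu]_(x in `]a, b]) (EFin \o f) x = 0)%E.
  by rewrite -(fineK fin); rewrite /Rintegral in H0; rewrite -H0.
have [mf _] := integrableP _ _ _ intf.
have : (\int[mu]_(x in `]a, b]) `|(EFin \o f) x| = 0)%E.
  rewrite -I0; apply: eq_integral => x; rewrite inE /= in_itv /= => xab.
  by rewrite ger0_norm // f0.
move/(ae_eq_integral_abs mu (measurable_itv _) mf).
case=> N [mN N0 sub].
have : (mu `]a, b[ <= mu N)%E.
  apply: le_measure; rewrite ?inE //.
  move=> x xab; apply: sub => /= H.
  have xab' : a < x < b by move: xab; rewrite /= in_itv.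
  have := fp x xab'; rewrite -lte_fin.
  have : ([set` `]a, b]] x) by move: xab'; rewrite /= !in_itv /= => /andP[-> /ltW ->].
  by move/H => /= ->; rewrite ltxx.
by rewrite N0 lebesgue_measure_itv /= lte_fin ab -EFinD lee_fin subr_le0 leNgt ab.
Qed.

Definition nice (g : R -> R) :=
  measurable_fun (@nonneg_half R) g /\ locally_bounded_on_halfline g.

Definition Phi (g : R -> R) (y : R) := \int[mu]_(x in `[0, y]) g x.

Lemma nonneg_half_itv : @nonneg_half R = `[0, +oo[%classic.
Proof. by apply/seteqP; split => x; rewrite /nonneg_half /= in_itv /= andbT. Qed.

Lemma measurable_nonneg_half : measurable (@nonneg_half R).
Proof. by rewrite nonneg_half_itv; exact: measurable_itv. Qed.

Lemma nice_int g a b : nice g -> 0 <= a -> mu.-integrable `[a, b] (EFin \o g).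
Proof.
move=> [mg lbg] a0.
apply: measurable_bounded_integrable.
- exact: measurable_itv.
- by have := lebesgue_measure_itv `[a, b]; rewrite /= => ->; case: ifP => _; rewrite ?ltry.
- apply: measurable_funS mg; first exact: measurable_nonneg_half.
  by move=> x; rewrite /= in_itv /= /nonneg_half /= => /andP[ax _]; exact: le_trans ax.
- have amax : a <= Num.max a b by rewrite le_max lexx.
  have [M HM] := lbg (Num.max a b) (le_trans a0 amax).
  exists M; split; first exact: num_real.
  move=> N MN x; rewrite /= in_itv /= => /andP[ax xb].
  apply: le_trans (ltW MN); apply: HM.
  by rewrite (le_trans a0 ax) /= (le_trans xb) // le_max lexx orbT.
Qed.

Lemma nice_int_oc g a b : nice g -> 0 <= a -> mu.-integrable `]a, b] (EFin \o g).
Proof.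
move=> ng a0; have h := nice_int g a b ng a0.
apply: (integrableS _ _ _ h); [exact: measurable_itv|exact: measurable_itv|].
by apply: subset_itv; rewrite bnd_simp.
Qed.


Lemma nice_cst c : nice (fun _ => c).
Proof.
split; first exact: measurable_cst.
by move=> a a0; exists `|c| => x _.
Qed.

Lemma nice_id : nice (fun x => x).
Proof.
split; first exact: measurable_id.
move=> a a0; exists a => x /andP[x0 xa]; by rewrite ger0_norm.
Qed.

Lemma nice_add f g : nice f -> nice g -> nice (fun x => f x + g x).
Proof.
move=> [mf bf] [mg bg]; split; first exact: measurable_realfun.measurable_funD.
move=> a a0; have [M HM] := bf a a0; have [N HN] := bg a a0.
exists (M + N) => x xa; apply: le_trans (ler_normD _ _) _.
by apply: lerD; [exact: HM|exact: HN].
Qed.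

Lemma nice_mul f g : nice f -> nice g -> nice (fun x => f x * g x).
Proof.
move=> [mf bf] [mg bg]; split; first exact: measurable_realfun.measurable_funM.
move=> a a0; have [M HM] := bf a a0; have [N HN] := bg a a0.
exists (M * N) => x xa; rewrite normrM.
by apply: ler_pM; [exact: normr_ge0|exact: normr_ge0|exact: HM|exact: HN].
Qed.

Lemma nice_opp f : nice f -> nice (fun x => - f x).
Proof.
move=> nf; have -> : (fun x => - f x) = (fun x => (fun _ => -1) x * f x).
  by apply/funext => x; rewrite mulN1r.
exact: nice_mul (nice_cst _) nf.
Qed.

Lemma nice_sub f g : nice f -> nice g -> nice (fun x => f x - g x).
Proof. by move=> nf ng; apply: (nice_add _ _ nf (nice_opp _ ng)). Qed.

Arguments nice_add {f g}.
Arguments nice_mul {f g}.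
Arguments nice_sub {f g}.
Arguments nice_opp {f}.

Lemma Phi0 g : Phi g 0 = 0.
Proof. by rewrite /Phi set_itv1 Rintegral_set1. Qed.

Lemma Phi_split g a b : nice g -> 0 <= a -> a <= b ->
  Phi g b - Phi g a = \int[mu]_(x in `]a, b]) g x.
Proof.
move=> ng a0 ab; rewrite /Phi.
apply: (Rintegral_itvB (a := BLeft 0) (b := BRight b)).
- exact: nice_int.
- by rewrite bnd_simp.
- by rewrite bnd_simp.
Qed.

Lemma Phi_add f g y : nice f -> nice g -> 0 <= y ->
  Phi (fun x => f x + g x) y = Phi f y + Phi g y.
Proof.
move=> nf ng y0; rewrite /Phi; apply: RintegralD.
- exact: measurable_itv.
- exact: nice_int.
- exact: nice_int.
Qed.

Lemma Phi_scale c g y : nice g -> 0 <= y ->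
  Phi (fun x => c * g x) y = c * Phi g y.
Proof.
move=> ng y0; rewrite /Phi; apply: RintegralZl.
- exact: measurable_itv.
- exact: nice_int.
Qed.

Lemma Phi_cont g b : nice g -> 0 <= b -> {within `[0, b], continuous (Phi g)}.
Proof.
move=> ng b0; exact: (parameterized_integral_continuous b0 (nice_int g 0 b ng (lexx 0))).
Qed.

Lemma Rint_oc_ge0 g a b : (forall x, a < x <= b -> 0 <= g x) ->
  0 <= \int[mu]_(x in `]a, b]) g x.
Proof. by move=> H; apply: Rintegral_ge0 => x; rewrite /= in_itv /=; apply: H. Qed.

Lemma Rint_oc_gt0' g a b : nice g -> 0 <= a -> a < b ->
  (forall x, a < x <= b -> 0 <= g x) -> (forall x, a < x < b -> 0 < g x) ->
  0 < \int[mu]_(x in `]a, b]) g x.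
Proof. by move=> ng a0 ab; apply: Rint_gt0 => //; exact: nice_int_oc. Qed.

Lemma Rint_oc_opp g a b : nice g -> 0 <= a ->
  \int[mu]_(x in `]a, b]) (- g x) = - \int[mu]_(x in `]a, b]) g x.
Proof.
move=> ng a0.
have -> : - (\int[mu]_(x in `]a, b]) g x) = -1 * (\int[mu]_(x in `]a, b]) g x) by rewrite mulN1r.
transitivity (\int[mu]_(x in `]a, b]) (-1 * g x)).
  by apply: eq_Rintegral => x _; rewrite mulN1r.
apply: RintegralZl.
- exact: measurable_itv.
- exact: nice_int_oc.
Qed.

Lemma Rint_oc_le0 g a b : nice g -> 0 <= a -> (forall x, a < x <= b -> g x <= 0) ->
  \int[mu]_(x in `]a, b]) g x <= 0.
Proof.
move=> ng a0 H; rewrite -oppr_ge0 -Rint_oc_opp //.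
by apply: Rint_oc_ge0 => x xab; rewrite oppr_ge0 H.
Qed.

Lemma Rint_oc_lt0 g a b : nice g -> 0 <= a -> a < b ->
  (forall x, a < x <= b -> g x <= 0) -> (forall x, a < x < b -> g x < 0) ->
  \int[mu]_(x in `]a, b]) g x < 0.
Proof.
move=> ng a0 ab H1 H2; rewrite -oppr_gt0 -Rint_oc_opp //.
apply: Rint_gt0 => //.
- have -> : (fun x => - g x) = (fun x => -1 * g x) by apply/funext => x; rewrite mulN1r.
  have nN : nice (fun x => -1 * g x) by apply: nice_mul => //; exact: nice_cst.
  exact: (nice_int_oc _ a b nN a0).
- by move=> x xab; rewrite oppr_ge0 H1.
- by move=> x xab; rewrite oppr_gt0 H2.
Qed.


Lemma inf_img_le (f : R -> R) c y : (forall z, 0 <= z -> c <= f z) -> 0 <= y ->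
  inf [set f z | z in @nonneg_half R] <= f y.
Proof.
move=> H y0.
have hl : has_lbound [set f z | z in @nonneg_half R].
  by exists c => _ [z z0 <-]; apply: H.
by apply: (ge_inf hl); exists y.
Qed.

Lemma inf_img_ge (f : R -> R) c : (forall z, 0 <= z -> c <= f z) ->
  c <= inf [set f z | z in @nonneg_half R].
Proof.
move=> H; apply: lb_le_inf.
  by exists (f 0), 0 => //; rewrite /nonneg_half /=.
by move=> _ [z z0 <-]; apply: H.
Qed.

Lemma inf_img_eq (f : R -> R) ys : 0 <= ys -> (forall z, 0 <= z -> f ys <= f z) ->
  inf [set f z | z in @nonneg_half R] = f ys.
Proof.
move=> ys0 H; apply/le_anti; rewrite (inf_img_le _ _ _ H ys0) /=.
exact: (inf_img_ge _ _ H).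
Qed.


Section Main.
Variables (u0 ub rho0 rhob : R -> R).
Hypothesis SA : standing_assumptions u0 ub rho0 rhob.
Variable t : R.
Hypothesis t0 : 0 < t.

Lemma nice_u0 : nice u0.
Proof.
case: SA => [[m [M HM]] _ _ _]; split => // a _; exists M => x /andP[x0 _]; exact: HM.
Qed.
Lemma nice_ub : nice ub.
Proof.
case: SA => [_ [m [[M HM] _]] _ _]; split => // a _; exists M => x /andP[x0 _]; exact: HM.
Qed.
Lemma nice_rho0 : nice rho0.
Proof. by case: SA => [_ _ [m [lb _]] _]; split. Qed.
Lemma nice_rhob : nice rhob.
Proof. by case: SA => [_ _ _ [m [lb _]]]; split. Qed.
Lemma ub_pos x : 0 <= x -> 0 < ub x.
Proof. by case: SA => [_ [_ [_ H]] _ _]; apply: H. Qed.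
Lemma rho0_pos x : 0 <= x -> 0 < rho0 x.
Proof. by case: SA => [_ _ [_ [_ H]] _]; apply: H. Qed.
Lemma rhob_pos x : 0 <= x -> 0 < rhob x.
Proof. by case: SA => [_ _ _ [_ [_ H]]]; apply: H. Qed.

Definition gF x := fun e => (t * u0 e + e - x) * rho0 e.
Definition gG x := fun e => (x - ub e * (t - e)) * rhob e * ub e.
Definition wG := fun e => rhob e * ub e.

Lemma nice_gF x : nice (gF x).
Proof.
exact: (nice_mul (nice_sub (nice_add (nice_mul (nice_cst t) nice_u0) nice_id) (nice_cst x)) nice_rho0).
Qed.

Lemma nice_wG : nice wG.
Proof. exact: (nice_mul nice_rhob nice_ub). Qed.

Lemma nice_gG x : nice (gG x).
Proof.
exact: (nice_mul (nice_mul (nice_sub (nice_cst x) (nice_mul nice_ub (nice_sub (nice_cst t) nice_id))) nice_rhob) nice_ub).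
Qed.


Lemma F_rel x y : 0 <= y -> Phi (gF x) y = Phi (gF 0) y - x * Phi rho0 y.
Proof.
move=> y0.
have -> : gF x = (fun e => gF 0 e + (fun e => - x * rho0 e) e).
  by apply/funext => e; rewrite /gF; ring.
rewrite Phi_add //; last exact: (nice_mul (nice_cst _) nice_rho0).
  by rewrite Phi_scale // ?mulNr //; exact: nice_rho0.
exact: nice_gF.
Qed.

Lemma G_rel x y : 0 <= y -> Phi (gG x) y = Phi (gG 0) y + x * Phi wG y.
Proof.
move=> y0.
have -> : gG x = (fun e => gG 0 e + (fun e => x * wG e) e).
  by apply/funext => e; rewrite /gG /wG; ring.
rewrite Phi_add //; last exact: (nice_mul (nice_cst _) nice_wG).
  by rewrite Phi_scale //; exact: nice_wG.
exact: nice_gG.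
Qed.

Lemma F_attain x : exists ys K, [/\ 0 <= ys, 0 <= K,
  (forall y, 0 <= y -> Phi (gF x) ys <= Phi (gF x) y) &
  (forall y, K < y -> Phi (gF x) ys < Phi (gF x) y)].
Proof.
case: SA => [[_ [Mu HMu]] _ _ _].
set K := `|x| + t * `|Mu|.
have K0 : 0 <= K by rewrite addr_ge0 // mulr_ge0 // ltW.
have [ys ysK ysmin] := EVT_min K0 (Phi_cont _ _ (nice_gF x) K0).
have ys0 : 0 <= ys by move: ysK; rewrite in_itv /= => /andP[].
have ysK' : ys <= K by move: ysK; rewrite in_itv /= => /andP[].
have gt : forall y, K < y -> Phi (gF x) K < Phi (gF x) y.
  move=> y Ky; have ng := nice_gF x; have Ky' := ltW Ky.
  rewrite -subr_gt0 Phi_split //.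
    apply: Rint_oc_gt0' => //.
    + move=> e /andP[Ke _]; apply: ltW; rewrite /gF mulr_gt0 //; last first.
        by apply: rho0_pos; apply: le_trans K0 (ltW Ke).
      have e0 : 0 <= e by apply: le_trans K0 (ltW Ke).
      have hu := HMu e e0.
      move: hu; rewrite ler_norml => /andP[h1 h2].
      have hm : 0 <= t * (u0 e + `|Mu|).
        by apply: mulr_ge0; [exact: ltW | have := ler_norm Mu; lra].
      rewrite mulrDr in hm.
      have := ler_norm x.
      rewrite /K in Ke. lra.
    + move=> e /andP[Ke _]; rewrite /gF mulr_gt0 //; last first.
        by apply: rho0_pos; apply: le_trans K0 (ltW Ke).
      have e0 : 0 <= e by apply: le_trans K0 (ltW Ke).
      have hu := HMu e e0.
      move: hu; rewrite ler_norml => /andP[h1 h2].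
      have hm : 0 <= t * (u0 e + `|Mu|).
        by apply: mulr_ge0; [exact: ltW | have := ler_norm Mu; lra].
      rewrite mulrDr in hm.
      have := ler_norm x.
      rewrite /K in Ke. lra.
exists ys, K; split => //.
- move=> y y0; have [yK|Ky] := leP y K.
    by apply: ysmin; rewrite in_itv /= y0 yK.
  apply: ltW; apply: le_lt_trans (gt _ Ky).
  by apply: ysmin; rewrite in_itv /= K0 lexx.
- move=> y Ky; apply: le_lt_trans (gt _ Ky).
  by apply: ysmin; rewrite in_itv /= K0 lexx.
Qed.


Lemma gG0E e : gG 0 e = (ub e * rhob e * ub e) * (e - t).
Proof. by rewrite /gG; ring. Qed.

Lemma cpos e : 0 <= e -> 0 < ub e * rhob e * ub e.
Proof. by move=> e0; rewrite !mulr_gt0 // ?ub_pos ?rhob_pos. Qed.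

Lemma G0_min tau : 0 <= tau -> Phi (gG 0) t <= Phi (gG 0) tau.
Proof.
move=> tau0; have ng := nice_gG 0; have t0' := ltW t0.
have [tt|tt] := leP tau t.
  rewrite -subr_le0 Phi_split //; apply: Rint_oc_le0 => // e /andP[te et].
  rewrite gG0E pmulr_rle0 ?subr_le0 //; apply: cpos; exact: le_trans tau0 (ltW te).
rewrite -subr_ge0 Phi_split //; last exact: ltW.
apply: Rint_oc_ge0 => e /andP[te et].
rewrite gG0E pmulr_rge0 ?subr_ge0 ?ltW //; apply: cpos; exact: le_trans t0' (ltW te).
Qed.

Lemma G0_strict tau : t < tau -> Phi (gG 0) t < Phi (gG 0) tau.
Proof.
move=> tt; have ng := nice_gG 0; have t0' := ltW t0.
rewrite -subr_gt0 Phi_split //; last exact: ltW.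
apply: Rint_oc_gt0' => // e /andP[te et].
  rewrite gG0E pmulr_rge0 ?subr_ge0 ?ltW //; apply: cpos; exact: le_trans t0' (ltW te).
rewrite gG0E pmulr_rgt0 ?subr_gt0 //; apply: cpos; exact: le_trans t0' (ltW te).
Qed.

Lemma G0_half : Phi (gG 0) t < Phi (gG 0) (t / 2).
Proof.
have ng := nice_gG 0; have t0' := ltW t0.
have h0 : 0 <= t / 2 by rewrite divr_ge0.
have h1 : t / 2 < t by have := t0; lra.
rewrite -subr_lt0 Phi_split //; last exact: ltW.
apply: Rint_oc_lt0 => // e /andP[te et].
  rewrite gG0E pmulr_rle0 ?subr_le0 //; apply: cpos; exact: le_trans h0 (ltW te).
rewrite gG0E pmulr_rlt0 ?subr_lt0 //; apply: cpos; exact: le_trans h0 (ltW te).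
Qed.

Lemma G0_le_half tau : 0 <= tau -> tau <= t / 2 -> Phi (gG 0) (t / 2) <= Phi (gG 0) tau.
Proof.
move=> tau0 tt; have ng := nice_gG 0.
rewrite -subr_le0 Phi_split //; apply: Rint_oc_le0 => // e /andP[te et].
rewrite gG0E pmulr_rle0 ?subr_le0 //; first by apply: le_trans et _; lra.
apply: cpos; exact: le_trans tau0 (ltW te).
Qed.

Lemma wG_ge0 tau : 0 <= tau -> 0 <= Phi wG tau.
Proof.
move=> tau0; apply: Rintegral_ge0 => e; rewrite /= in_itv /= => /andP[e0 _].
by rewrite /wG mulr_ge0 // ltW // ?ub_pos ?rhob_pos.
Qed.

Lemma wG_mono tau : t / 2 <= tau -> Phi wG (t / 2) <= Phi wG tau.
Proof.
move=> tt; have nw := nice_wG.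
have h0 : 0 <= t / 2 by rewrite divr_ge0 // ltW.
rewrite -subr_ge0 Phi_split //; apply: Rint_oc_ge0 => e /andP[te _].
have e0 : 0 <= e by apply: le_trans h0 (ltW te).
by rewrite /wG mulr_ge0 // ltW // ?ub_pos ?rhob_pos.
Qed.

Lemma wG_half_pos : 0 < Phi wG (t / 2).
Proof.
have nw := nice_wG; have h0 : 0 < t / 2 by rewrite divr_gt0.
have := Phi_split wG 0 (t / 2) nw (lexx 0) (ltW h0); rewrite Phi0 subr0 => ->.
apply: Rint_oc_gt0' => // e /andP[te _].
  by rewrite /wG mulr_ge0 // ltW // ?ub_pos ?rhob_pos // ltW.
by rewrite /wG mulr_gt0 // ?ub_pos ?rhob_pos // ltW.
Qed.


Lemma FminE x : Fmin u0 rho0 x t = inf [set Phi (gF x) y | y in @nonneg_half R].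
Proof. by []. Qed.

Lemma GminE x : Gmin ub rhob x t = inf [set Phi (gG x) y | y in @nonneg_half R].
Proof. by []. Qed.

Lemma FargminE x y : Fargmin u0 rho0 x t y <-> 0 <= y /\ Phi (gF x) y = Fmin u0 rho0 x t.
Proof. by []. Qed.

Lemma GargminE x y : Gargmin ub rhob x t y <-> 0 <= y /\ Phi (gG x) y = Gmin ub rhob x t.
Proof. by []. Qed.

Lemma F_info x : exists ys K, [/\ 0 <= ys, 0 <= K,
  Fmin u0 rho0 x t = Phi (gF x) ys, Fargmin u0 rho0 x t ys &
  (forall y, Fargmin u0 rho0 x t y -> y <= K)].
Proof.
have [ys [K [ys0 K0 H1 H2]]] := F_attain x.
have E : Fmin u0 rho0 x t = Phi (gF x) ys by rewrite FminE; exact: inf_img_eq.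
exists ys, K; split => //.
move=> y /FargminE [y0 Hy]; rewrite leNgt; apply/negP => Ky.
by have := H2 _ Ky; rewrite Hy E ltxx.
Qed.

Lemma F_lb x y : 0 <= y -> Fmin u0 rho0 x t <= Phi (gF x) y.
Proof.
have [ys [K [ys0 K0 E _ _]]] := F_info x.
have [ys' [K' [_ _ H1 _]]] := F_attain x.
move=> y0; rewrite FminE; apply: (inf_img_le _ (Phi (gF x) ys')) => //.
Qed.

Lemma key1 x1 : 0 < x1 -> Fmin u0 rho0 x1 t <= Fmin u0 rho0 0 t.
Proof.
move=> x10; rewrite [X in _ <= X]FminE; apply: inf_img_ge => z z0.
apply: le_trans (F_lb x1 z z0) _.
rewrite F_rel // lerBlDr lerDl; apply: mulr_ge0; first exact: ltW.
by apply: Rintegral_ge0 => e; rewrite /= in_itv /= => /andP[e0 _]; apply: ltW; apply: rho0_pos.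
Qed.

Lemma key2 x1 : 0 < x1 -> Gmin ub rhob 0 t < Gmin ub rhob x1 t.
Proof.
move=> x10.
have h0 : Gmin ub rhob 0 t <= Phi (gG 0) t.
  rewrite GminE; apply: (inf_img_le _ (Phi (gG 0) t)); last exact: ltW.
  by move=> z z0; apply: G0_min.
have A0 : 0 < x1 * Phi wG (t / 2) by rewrite mulr_gt0 ?wG_half_pos.
have B0 : 0 < Phi (gG 0) (t / 2) - Phi (gG 0) t by rewrite subr_gt0; exact: G0_half.
have [d [d0 [hA hB]]] : exists d, 0 < d /\ d <= x1 * Phi wG (t / 2) /\ d <= Phi (gG 0) (t / 2) - Phi (gG 0) t.
  have [AB|AB] := leP (x1 * Phi wG (t / 2)) (Phi (gG 0) (t / 2) - Phi (gG 0) t).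
    by exists (x1 * Phi wG (t / 2)); split => //; split.
  by exists (Phi (gG 0) (t / 2) - Phi (gG 0) t); split => //; split => //; exact: ltW.
apply: le_lt_trans h0 _.
apply: (@lt_le_trans _ _ (Phi (gG 0) t + d)); first by rewrite ltrDl.
rewrite GminE; apply: inf_img_ge => z z0.
rewrite (G_rel x1 z z0).
have [zt|zt] := leP z (t / 2).
  have h2 := G0_le_half z z0 zt; have h3 := wG_ge0 z z0.
  have h4 : 0 <= x1 * Phi wG z by apply: mulr_ge0; [exact: ltW|exact: h3].
  apply: (@le_trans _ _ (Phi (gG 0) z)); last by rewrite lerDl.
  apply: le_trans h2; move: hB; set P := Phi (gG 0) (t / 2); set Q := Phi (gG 0) t.
  lra.
have h2 := G0_min z z0; have h3 := wG_mono z (ltW zt).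
have h4 : x1 * Phi wG (t / 2) <= x1 * Phi wG z by rewrite ler_pM2l.
apply: lerD => //; apply: le_trans hA h4.
Qed.

Lemma key3 : tau_up ub rhob 0 t <= t.
Proof.
rewrite /tau_up.
have [[z Hz]|ne] := pselect (Gargmin ub rhob 0 t !=set0); last first.
  have -> : Gargmin ub rhob 0 t = set0.
    by apply/seteqP; split => z Hz //; exfalso; apply: ne; exists z.
  by rewrite sup0 ltW.
apply: ge_sup; first by exists z.
move=> y /GargminE [y0 Hy]; rewrite leNgt; apply/negP => ty.
have := G0_strict y ty; rewrite Hy.
have : Gmin ub rhob 0 t <= Phi (gG 0) t.
  rewrite GminE; apply: (inf_img_le _ (Phi (gG 0) t)); last exact: ltW.
  by move=> w w0; apply: G0_min.
move=> h1 h2; have := lt_le_trans h2 h1; by rewrite ltxx.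
Qed.

Lemma mono x1 y0 y1 : 0 < x1 -> Fargmin u0 rho0 0 t y0 -> Fargmin u0 rho0 x1 t y1 -> y0 <= y1.
Proof.
move=> x10 /FargminE [y00 H0] /FargminE [y10 H1].
have A : Phi (gF 0) y0 <= Phi (gF 0) y1 by rewrite H0; apply: F_lb.
have B : Phi (gF x1) y1 <= Phi (gF x1) y0 by rewrite H1; apply: F_lb.
rewrite (F_rel x1 y1 y10) (F_rel x1 y0 y00) in B.
have C : x1 * Phi rho0 y0 <= x1 * Phi rho0 y1 by lra.
rewrite ler_pM2l // in C.
rewrite leNgt; apply/negP => lt10.
have := Phi_split rho0 y1 y0 nice_rho0 y10 (ltW lt10).
have : 0 < \int[mu]_(x in `]y1, y0]) rho0 x.
  apply: Rint_oc_gt0' => //; first exact: nice_rho0.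
    by move=> e /andP[e1 _]; apply/ltW/rho0_pos; apply: le_trans y10 (ltW e1).
  by move=> e /andP[e1 _]; apply/rho0_pos; apply: le_trans y10 (ltW e1).
move=> h1 h2; lra.
Qed.

Lemma key4 x1 : 0 < x1 ->
  [/\ 0 <= y_up u0 rho0 0 t, y_up u0 rho0 0 t <= y_low u0 rho0 x1 t &
      y_up u0 rho0 0 t <= y_up u0 rho0 x1 t].
Proof.
move=> x10.
have [ys0 [K0 [ys00 K00 _ A0 B0]]] := F_info 0.
have [ys1 [K1 [ys10 K10 _ A1 B1]]] := F_info x1.
have hs0 : has_ubound (Fargmin u0 rho0 0 t) by exists K0.
have hs1 : has_ubound (Fargmin u0 rho0 x1 t) by exists K1.
have Y0 : ys0 <= y_up u0 rho0 0 t by apply: ub_le_sup.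
have Yle : forall y1, Fargmin u0 rho0 x1 t y1 -> y_up u0 rho0 0 t <= y1.
  move=> y1 Hy1; apply: ge_sup; first by exists ys0.
  by move=> y Hy; apply: (mono _ _ _ x10 Hy Hy1).
split.
- exact: le_trans ys00 Y0.
- by apply: lb_le_inf; [exists ys1 | exact: Yle].
- apply: le_trans (Yle _ A1) _; exact: ub_le_sup.
Qed.

End Main.
End S.

Lemma geom (R : realType) (t x1 Y a b T : R) (p : R * R) :
  0 < t -> 0 < x1 -> 0 <= Y -> Y <= a -> Y <= b -> T <= t ->
  0 < p.1 -> 0 < p.2 ->
  hull3 (x1, t) (a, 0) (b, 0) p ->
  (hull4 (0, t) (Y, 0) (0, T) (0, 0) p \/ hull3 (0, t) (0, 0) (Y, 0) p) -> False.
Proof.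
move=> t0 x10 Y0 Ya Yb Tt p1 p2 [l1 [l2 [l3 [hl1 hl2 hl3 hs hp]]]].
rewrite hp /= !mulr0 !addr0 in p1 p2 *.
have l10 : 0 < l1 by rewrite -(pmulr_lgt0 _ t0).
have A : l2 * Y <= l2 * a by rewrite ler_wpM2l.
have B : l3 * Y <= l3 * b by rewrite ler_wpM2l.
have E : 0 < l1 * x1 by rewrite mulr_gt0.
case=> [[m1 [m2 [m3 [m4 [hm1 hm2 hm3 [hm4 hms] hq]]]]]|[m1 [m2 [m3 [hm1 hm2 hm3 hms hq]]]]].
- move: hq => [/= q1 q2].
  rewrite !mulr0 !add0r addr0 in q1 q2.
  have C : m3 * T <= m3 * t by rewrite ler_wpM2l.
  have L : l1 <= m1 + m3.
    rewrite -(ler_pM2r t0) mulrDl; lra.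
  have D : m2 * Y <= (l2 + l3) * Y by rewrite ler_wpM2r //; lra.
  rewrite mulrDl in D; lra.
- move: hq => [/= q1 q2].
  rewrite !mulr0 !add0r ?addr0 in q1 q2.
  have L : l1 = m1 by apply: (mulIf (lt0r_neq0 t0)); lra.
  have D : m3 * Y <= (l2 + l3) * Y by rewrite ler_wpM2r //; lra.
  rewrite mulrDl in D; lra.
Qed.

Theorem lemma2p10 (R : realType) (u0 ub rho0 rhob : R -> R) :
  standing_assumptions u0 ub rho0 rhob ->
  forall t x1 : R, 0 < t -> 0 < x1 ->
  forall p : R * R,
    char_triangle u0 ub rho0 rhob 0 t p ->
    char_triangle u0 ub rho0 rhob x1 t p ->
    ~ (0 < p.1 /\ 0 < p.2).
Proof.
move=> SA t x1 t0 x10 p H0 H1 [p1 p2].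
have k1 := key1 _ _ _ _ SA _ t0 _ x10.
have k2 := key2 _ _ _ _ SA _ t0 _ x10.
have k3 := key3 _ _ _ _ SA _ t0.
have [Y0 Ya Yb] := key4 _ _ _ _ SA _ t0 _ x10.
rewrite /char_triangle /= ltxx /= in H0.
rewrite /char_triangle /= in H1.
have [hGF|hFG] := ltP (Gmin ub rhob 0 t) (Fmin u0 rho0 0 t).
  rewrite hGF in H0.
  case: H0 => [l1 [l2 [l3 [_ _ _ _ hp]]]].
  by move: p1; rewrite hp /= !mulr0 !addr0 ltxx.
have FG1 : Fmin u0 rho0 x1 t < Gmin ub rhob x1 t.
  by apply: le_lt_trans k1 (le_lt_trans hFG k2).
rewrite x10 FG1 /= in H1.
have e : (Gmin ub rhob 0 t < Fmin u0 rho0 0 t) = false by rewrite ltNge hFG.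
rewrite e in H0.
move: H0; case: ifP => _ H0.
  exact: (@geom R t x1 _ _ _ _ p t0 x10 Y0 Ya Yb k3 p1 p2 H1 (or_introl H0)).
exact: (@geom R t x1 _ _ _ _ p t0 x10 Y0 Ya Yb k3 p1 p2 H1 (or_intror H0)).
Qed.
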